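(* (Energy preservation of the KZ power spectral density.) Let $\omega_0>0$, $z\ge 0$, $\epsilon>0$, and let $(S^0_k)_{k\in\mathbb{Z}}$ be a finitely supported sequence of real numbers. Define for $k\in\mathbb{Z}$ $$S^{\mathrm{KZ}}_k(z):=S^0_k+8\epsilon^2\sum_{(l,m,n)\in\mathrm{nr}_k}|H_{lmnk}(z)|^2\,T_{lmnk},$$ with $T_{lmnk}:=S^0_lS^0_mS^0_n+S^0_lS^0_mS^0_k-S^0_lS^0_nS^0_k-S^0_mS^0_nS^0_k$. Then $$\sum_{k\in\mathbb{Z}}S^{\mathrm{KZ}}_k(z)=\sum_{k\in\mathbb{Z}}S^0_k,$$ equivalently $\sum_{k}\sum_{(l,m,n)\in\mathrm{nr}_k}|H_{lmnk}(z)|^2T_{lmnk}=0$.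
   Context: $\mathrm{nr}_k:=\{(l,m,n)\in\mathbb{Z}^3:\ l+m=n+k,\ l\neq k,\ m\neq k\}$. $\Omega_{lmnk}:=\omega_0^2(l^2+m^2-n^2-k^2)$. The $H$-function is $H_{lmnk}(z):=(1-e^{j\Omega_{lmnk}z})/\Omega_{lmnk}$ if $\Omega_{lmnk}\neq0$ and $H_{lmnk}(z):=-jz$ if $\Omega_{lmnk}=0$ (here $j=\sqrt{-1}$). $T_{lmnk}$ is called the collision term. *)

(* Defs.v *)
From Stdlib Require Import Reals ZArith Lia Lra.
From Stdlib Require Import ClassicalEpsilon.
Open Scope R_scope.

Fixpoint box_sum_nat (f : Z -> R) (n : nat) : R :=
  match n with
  | O => f 0%Z
  | S p => box_sum_nat f p + f (Z.of_nat (S p)) + f (- Z.of_nat (S p))%Z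
  end.

Definition supported_in (f : Z -> R) (N : nat) : Prop :=
  forall k : Z, (Z.of_nat N < Z.abs k)%Z -> f k = 0.

Definition fin_supp (f : Z -> R) : Prop := exists N : nat, supported_in f N.

(* Sum over Z of a finitely supported family: sum over any box containing
   the support (chosen by Hilbert's epsilon; the value is irrelevant for
   families that are not finitely supported, which never occur here). *)
Definition Zsum (f : Z -> R) : R :=
  box_sum_nat f (epsilon (inhabits 0%nat) (supported_in f)).

Definition in_nr (k l m n : Z) : bool :=
  (Z.eqb (l + m) (n + k) && negb (Z.eqb l k) && negb (Z.eqb m k))%bool.

Definition Omega (omega0 : R) (l m n k : Z) : R :=
  omega0 ^ 2 * IZR (l ^ 2 + m ^ 2 - n ^ 2 - k ^ 2).

(* H_{lmnk}(z) as a complex number (real part, imaginary part):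
   (1 - e^{j W z}) / W  if W <> 0, and  -j z  if W = 0. *)
Definition H (omega0 : R) (l m n k : Z) (z : R) : R * R :=
  let W := Omega omega0 l m n k in
  if Req_EM_T W 0 then (0, - z)
  else ((1 - cos (W * z)) / W, - sin (W * z) / W).

Definition Cnorm2 (c : R * R) : R := fst c ^ 2 + snd c ^ 2.

Definition T (S0 : Z -> R) (l m n k : Z) : R :=
  S0 l * S0 m * S0 n + S0 l * S0 m * S0 k - S0 l * S0 n * S0 k
  - S0 m * S0 n * S0 k.

Definition SKZ (omega0 eps z : R) (S0 : Z -> R) (k : Z) : R :=
  S0 k + 8 * eps ^ 2 *
    Zsum (fun l => Zsum (fun m => Zsum (fun n =>
      if in_nr k l m n then Cnorm2 (H omega0 l m n k z) * T S0 l m n k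
      else 0))).

(* Main.v *)
Require Import Defs.
From Stdlib Require Import Reals ZArith.
From Stdlib Require Import Lia Lra ClassicalEpsilon FunctionalExtensionality.
Open Scope R_scope.

Notation B := box_sum_nat.

Lemma bs_ext f g n : (forall x, f x = g x) -> B f n = B g n.
Proof. intro E. induction n; cbn [box_sum_nat]; rewrite ?IHn, ?E; reflexivity. Qed.

Lemma bs_plus f g n : B (fun x => f x + g x) n = B f n + B g n.
Proof. induction n; cbn [box_sum_nat]; [reflexivity|rewrite IHn; ring]. Qed.

Lemma bs_minus f g n : B (fun x => f x - g x) n = B f n - B g n.
Proof. induction n; cbn [box_sum_nat]; [reflexivity|rewrite IHn; ring]. Qed.

Lemma bs_scale c f n : B (fun x => c * f x) n = c * B f n.
Proof. induction n; cbn [box_sum_nat]; [reflexivity|rewrite IHn; ring]. Qed.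

Lemma bs_zero f n : (forall x, f x = 0) -> B f n = 0.
Proof. intro E. induction n; cbn [box_sum_nat]; rewrite ?IHn, ?E; ring. Qed.

Lemma bs_exch (F : Z -> Z -> R) n1 n2 :
  B (fun x => B (fun y => F x y) n2) n1 = B (fun y => B (fun x => F x y) n1) n2.
Proof.
  induction n1; cbn [box_sum_nat].
  - reflexivity.
  - rewrite IHn1, <- !bs_plus. apply bs_ext; intro; reflexivity.
Qed.

Lemma bs_extend f N d : supported_in f N -> B f (N + d) = B f N.
Proof.
  intro hN. induction d.
  - rewrite Nat.add_0_r; reflexivity.
  - rewrite Nat.add_succ_r. cbn [box_sum_nat]. rewrite IHd.
    rewrite !hN by lia. ring.
Qed.

Lemma Zsum_box f N : supported_in f N -> Zsum f = B f N.
Proof.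
  intro hN. unfold Zsum. set (E := epsilon _ _).
  assert (HE : supported_in f E) by (apply epsilon_spec; exists N; exact hN).
  replace (Init.Nat.max E N) with (E + (Init.Nat.max E N - E))%nat by lia.
  rewrite <- (bs_extend f E (Init.Nat.max E N - E)) by exact HE.
  rewrite <- (bs_extend f N (E + (Init.Nat.max E N - E) - N)) by exact hN.
  f_equal. lia.
Qed.

Lemma Zsum_ext f g : (forall x, f x = g x) -> Zsum f = Zsum g.
Proof. intro E. apply functional_extensionality in E. subst; reflexivity. Qed.

Lemma T_zero S0 N : supported_in S0 N -> forall l m n k, (l + m = n + k)%Z ->
  (Z.of_nat (3*N) < Z.abs l \/ Z.of_nat (3*N) < Z.abs m \/
   Z.of_nat (3*N) < Z.abs n \/ Z.of_nat (3*N) < Z.abs k)%Z ->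
  T S0 l m n k = 0.
Proof.
  intros hN l m n k E D. unfold T.
  destruct (Z_le_gt_dec (Z.abs l) (Z.of_nat N)) as [Hl|Hl]; try rewrite (hN l) by lia;
  destruct (Z_le_gt_dec (Z.abs m) (Z.of_nat N)) as [Hm|Hm]; try rewrite (hN m) by lia;
  destruct (Z_le_gt_dec (Z.abs n) (Z.of_nat N)) as [Hn|Hn]; try rewrite (hN n) by lia;
  destruct (Z_le_gt_dec (Z.abs k) (Z.of_nat N)) as [Hk|Hk]; try rewrite (hN k) by lia;
  first [ring | lia].
Qed.

Definition G omega0 z S0 (k l m n : Z) : R :=
  if in_nr k l m n then Cnorm2 (H omega0 l m n k z) * T S0 l m n k else 0.

Lemma G_zero omega0 z S0 N : supported_in S0 N -> forall k l m n,
  (Z.of_nat (3*N) < Z.abs l \/ Z.of_nat (3*N) < Z.abs m \/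
   Z.of_nat (3*N) < Z.abs n \/ Z.of_nat (3*N) < Z.abs k)%Z ->
  G omega0 z S0 k l m n = 0.
Proof.
  intros hN k l m n D. unfold G.
  destruct (in_nr k l m n) eqn:E; [|reflexivity].
  unfold in_nr in E. apply Bool.andb_true_iff in E as [E _].
  apply Bool.andb_true_iff in E as [E _]. apply Z.eqb_eq in E.
  rewrite (T_zero S0 N hN l m n k E D). ring.
Qed.

Lemma H_sym omega0 z l m n k :
  Cnorm2 (H omega0 n k l m z) = Cnorm2 (H omega0 l m n k z).
Proof.
  unfold H.
  assert (EO : Omega omega0 n k l m = - Omega omega0 l m n k).
  { unfold Omega.
    replace (n ^ 2 + k ^ 2 - l ^ 2 - m ^ 2)%Z
      with (- (l ^ 2 + m ^ 2 - n ^ 2 - k ^ 2))%Z by ring.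
    rewrite opp_IZR. ring. }
  rewrite EO. set (W := Omega omega0 l m n k).
  destruct (Req_EM_T (- W) 0); destruct (Req_EM_T W 0);
    try reflexivity; try lra.
  replace (- W * z) with (- (W * z)) by ring.
  rewrite cos_neg, sin_neg. unfold Cnorm2; simpl. field. lra.
Qed.

Definition cc omega0 z (l m n k : Z) : R :=
  if Z.eqb (l + m) (n + k) then Cnorm2 (H omega0 l m n k z) else 0.

Definition Xf omega0 z S0 (l m n k : Z) : R :=
  cc omega0 z l m n k * (S0 l * S0 m * S0 n + S0 l * S0 m * S0 k).

Lemma G_split omega0 z S0 k l m n :
  G omega0 z S0 k l m n = Xf omega0 z S0 l m n k - Xf omega0 z S0 n k l m.
Proof.
  unfold G, Xf, cc, in_nr, T.
  rewrite (H_sym omega0 z l m n k).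
  destruct (Z.eqb_spec (l + m) (n + k)); destruct (Z.eqb_spec (n + k) (l + m));
    try lia; simpl; [| ring].
  destruct (Z.eqb_spec l k); destruct (Z.eqb_spec m k); simpl.
  - assert (m = n) by lia. subst. ring.
  - assert (m = n) by lia. subst. ring.
  - assert (l = n) by lia. subst. ring.
  - ring.
Qed.

Lemma box4_perm (X : Z -> Z -> Z -> Z -> R) M :
  B (fun k => B (fun l => B (fun m => B (fun n => X n k l m) M) M) M) M =
  B (fun k => B (fun l => B (fun m => B (fun n => X l m n k) M) M) M) M.
Proof.
  transitivity (B (fun k => B (fun l => B (fun n => B (fun m => X n k l m) M) M) M) M).
  { apply bs_ext; intro k; apply bs_ext; intro l. exact (bs_exch (fun m n => X n k l m) M M). }
  transitivity (B (fun k => B (fun n => B (fun l => B (fun m => X n k l m) M) M) M) M).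
  { apply bs_ext; intro k. exact (bs_exch (fun l n => B (fun m => X n k l m) M) M M). }
  transitivity (B (fun n => B (fun k => B (fun l => B (fun m => X n k l m) M) M) M) M).
  { exact (bs_exch (fun k n => B (fun l => B (fun m => X n k l m) M) M) M M). }
  transitivity (B (fun n => B (fun k => B (fun m => B (fun l => X n k l m) M) M) M) M).
  { apply bs_ext; intro n; apply bs_ext; intro k. exact (bs_exch (fun l m => X n k l m) M M). }
  transitivity (B (fun n => B (fun m => B (fun k => B (fun l => X n k l m) M) M) M) M).
  { apply bs_ext; intro n. exact (bs_exch (fun k m => B (fun l => X n k l m) M) M M). }
  exact (bs_exch (fun n m => B (fun k => B (fun l => X n k l m) M) M) M M).
Qed.

Theorem mainTheorem5 (omega0 z eps : R) (S0 : Z -> R)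
  (homega0 : 0 < omega0) (hz : 0 <= z) (heps : 0 < eps)
  (hS0 : fin_supp S0) :
  Zsum (SKZ omega0 eps z S0) = Zsum S0.
Proof.
  destruct hS0 as [N hN].
  set (M := (3 * N)%nat).
  assert (hM : supported_in S0 M) by (intros k Hk; apply hN; unfold M in *; lia).
  set (Q := fun k => B (fun l => B (fun m => B (fun n => G omega0 z S0 k l m n) M) M) M).
  assert (HS : forall k, SKZ omega0 eps z S0 k = S0 k + 8 * eps ^ 2 * Q k).
  { intro k. unfold SKZ. f_equal. f_equal.
    transitivity (Zsum (fun l => Zsum (fun m => B (fun n => G omega0 z S0 k l m n) M))).
    { apply Zsum_ext; intro l; apply Zsum_ext; intro m.
      exact (Zsum_box (fun n => G omega0 z S0 k l m n) M
        (fun n Hn => G_zero omega0 z S0 N hN k l m n ltac:(unfold M in Hn; lia))). }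
    transitivity (Zsum (fun l => B (fun m => B (fun n => G omega0 z S0 k l m n) M) M)).
    { apply Zsum_ext; intro l; apply Zsum_box; intros m Hm.
      apply bs_zero; intro n; apply (G_zero omega0 z S0 N hN); unfold M in Hm; lia. }
    apply Zsum_box; intros l Hl.
    apply bs_zero; intro m; apply bs_zero; intro n; apply (G_zero omega0 z S0 N hN);
      unfold M in Hl; lia. }
  assert (HQ : B Q M = 0).
  { unfold Q.
    transitivity (B (fun k => B (fun l => B (fun m => B (fun n =>
       Xf omega0 z S0 l m n k - Xf omega0 z S0 n k l m) M) M) M) M).
    { apply bs_ext; intro k; apply bs_ext; intro l; apply bs_ext; intro m;
        apply bs_ext; intro n; apply G_split. }
    transitivity (B (fun k => B (fun l => B (fun m => B (fun n =>
       Xf omega0 z S0 l m n k) M) M) M) M -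
       B (fun k => B (fun l => B (fun m => B (fun n =>
       Xf omega0 z S0 n k l m) M) M) M) M).
    { rewrite <- bs_minus. apply bs_ext; intro k.
      rewrite <- bs_minus. apply bs_ext; intro l.
      rewrite <- bs_minus. apply bs_ext; intro m.
      rewrite <- bs_minus. reflexivity. }
    rewrite (box4_perm (Xf omega0 z S0)). ring. }
  rewrite (Zsum_box S0 M hM).
  rewrite (Zsum_box _ M).
  - rewrite (bs_ext _ (fun k => S0 k + 8 * eps ^ 2 * Q k) M HS).
    rewrite bs_plus, bs_scale, HQ. ring.
  - intros k Hk. rewrite HS, (hM k Hk).
    unfold Q. rewrite (bs_zero _ M). ring.
    intro l; apply bs_zero; intro m; apply bs_zero; intro n;
      apply (G_zero omega0 z S0 N hN); unfold M in Hk; lia.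
Qed.
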